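(* Let $\phi(u)=\frac{1}{\sqrt{2\pi}}e^{-u^2/2}$ and $Q(u)=\int_u^{\infty}\phi(t)\,dt$. (i) (DCO-OFDM) Fix $\sigma_y>0$ and $\epsilon_{top}\in\mathbb{R}$. The function $$P_{DCO}(\epsilon_B)=\epsilon_B\sigma_y+\sigma_y\big[\phi(\epsilon_B)-\phi(\epsilon_{top}-\epsilon_B)+(\epsilon_{top}-\epsilon_B)\phi(\epsilon_{top}-\epsilon_B)-\epsilon_B Q(\epsilon_B)\big],\qquad \epsilon_B\in\mathbb{R},$$ is not convex. (ii) (ACO-OFDM) Fix $y_{max}>0$ and an integer $m\ge 1$. For $\mathbf{w}=(w_1,\dots,w_m)\in\mathbb{R}^m\setminus\{0\}$ let $\sigma_y=\sqrt{\sum_{i=1}^m w_i^2}$ and $\epsilon_{top}=y_{max}/\sigma_y$. The function $$P_{ACO}(\mathbf{w})=\frac{\sigma_y}{\sqrt{2\pi}}+\sigma_y\big[\epsilon_{top}Q(\epsilon_{top})-\phi(\epsilon_{top})\big]$$ is not convex on $\mathbb{R}^m\setminus\{0\}$, i.e., there is a line segment contained in $\mathbb{R}^m\setminus\{0\}$ on which the restriction of $P_{ACO}$ is not convex.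
   Context: These functions are the mean transmitted optical power constraints in the subcarrier power allocation problems: for DCO-OFDM, $P_{DCO}=B_{DC}+\beta_{DCO}$ with DC bias $B_{DC}=\epsilon_B\sigma_y$, bias level $\epsilon_B$, top clipping level $\epsilon_{top}$ (peak power $y_{max}=\epsilon_{top}\sigma_y$), and $\sigma_y$ the RMS of the time-domain OFDM signal; for ACO-OFDM, $\sigma_y=\sqrt{\sum w_i^2}$ where $w_i$ are the subcarrier amplitude scale coefficients and $y_{max}$ is the fixed peak power. The lemma asserts that these constraint functions are non-convex. *)

(* Defs.v *)
From HB Require Import structures.
From mathcomp Require Import all_boot all_order all_algebra.
From mathcomp Require Import all_classical all_reals all_analysis.
Set Implicit Arguments. Unset Strict Implicit. Unset Printing Implicit Defensive.
Import Order.TTheory GRing.Theory Num.Theory.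
Import numFieldNormedType.Exports.
Local Open Scope classical_set_scope.
Local Open Scope ring_scope.

Definition phi {R : realType} (u : R) : R :=
  (Num.sqrt (2 * pi))^-1 * expR (- (u ^+ 2) / 2).

Definition Qf {R : realType} (u : R) : R :=
  (\int[@lebesgue_measure R]_(t in `[u, +oo[) phi t)%R.

Definition P_DCO {R : realType} (sy etop eB : R) : R :=
  eB * sy + sy * (phi eB - phi (etop - eB) + (etop - eB) * phi (etop - eB)
                  - eB * Qf eB).

Definition sigma_y {R : realType} (m : nat) (w : 'rV[R]_m) : R :=
  Num.sqrt (\sum_(i < m) w 0 i ^+ 2).

Definition P_ACO {R : realType} (ymax : R) (m : nat) (w : 'rV[R]_m) : R :=
  let s := sigma_y w in
  let etop := ymax / s in
  s / Num.sqrt (2 * pi) + s * (etop * Qf etop - phi etop).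

Definition convex_on_R {R : realType} (f : R -> R) : Prop :=
  forall (x y t : R), 0 <= t <= 1 ->
    f (t * x + (1 - t) * y) <= t * f x + (1 - t) * f y.

(* convexity of f on the (non-convex) set R^m \ {0}: along every line segment
   contained in R^m \ {0}, f satisfies Jensen's inequality *)
Definition convex_on_nonzero {R : realType} (m : nat) (f : 'rV[R]_m -> R) : Prop :=
  forall (x y : 'rV[R]_m),
    (forall s : R, 0 <= s <= 1 -> s *: x + (1 - s) *: y != 0) ->
    forall t : R, 0 <= t <= 1 ->
      f (t *: x + (1 - t) *: y) <= t * f x + (1 - t) * f y.

(* Main.v *)
Require Import Defs.
From HB Require Import structures.
From mathcomp Require Import all_boot all_order all_algebra.
From mathcomp Require Import all_classical all_reals all_analysis.
From mathcomp Require Import ring lra.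
Import Order.TTheory GRing.Theory Num.Theory.
Import numFieldNormedType.Exports.
Local Open Scope ring_scope.
Set Warnings "-notation-overridden,-ambiguous-paths,-notation-incompatible-prefix".

Section Aux.
Local Open Scope classical_set_scope.
Variable R : realType.
Notation mu := (@lebesgue_measure R).

Lemma lerexp (x y : R) : x <= y -> expR x <= expR y.
Proof. by rewrite ler_expR. Qed.

Definition K : R := (Num.sqrt (2 * pi))^-1.

Lemma K_gt0 : 0 < K.
Proof. by rewrite /K invr_gt0 sqrtr_gt0 mulr_gt0 ?pi_gt0. Qed.

Lemma phiE (u : R) : phi u = K * expR (- (u ^+ 2) / 2).
Proof. by []. Qed.

Lemma phi0 : phi (0:R) = K.
Proof. by rewrite phiE expr0n /= oppr0 mul0r expR0 mulr1. Qed.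

Lemma phi_ge0 (u : R) : 0 <= phi u.
Proof. by rewrite phiE mulr_ge0 ?expR_ge0 // ltW // K_gt0. Qed.

Lemma phi_anti (u v : R) : 0 <= v -> v <= u -> phi u <= phi v.
Proof.
move=> v0 vu; rewrite !phiE (ler_pM2l K_gt0). apply: lerexp.
rewrite ler_pM2r ?invr_gt0 // lerN2 ler_sqr //; exact: le_trans vu.
Qed.

Lemma phi_le0 (u : R) : phi u <= K.
Proof.
have h : expR (- (u ^+ 2) / 2) <= expR 0.
  by apply: lerexp; rewrite mulNr oppr_le0 mulr_ge0 ?sqr_ge0.
rewrite expR0 in h; rewrite phiE; have := K_gt0; nra.
Qed.

Lemma phi_normal : phi = normal_pdf 0 1 :> (R -> R).
Proof.
apply/funext => u; rewrite /normal_pdf oner_eq0 /= phiE /normal_peak /normal_fun.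
by rewrite subr0 expr1n mul1r /K mulr_natl.
Qed.

Lemma continuous_phi : continuous (@phi R).
Proof. by rewrite phi_normal; apply: continuous_normal_pdf; rewrite oner_eq0. Qed.

Lemma integrable_phi (A : set R) : measurable A -> mu.-integrable A (EFin \o @phi R).
Proof.
move=> mA; apply: (@integrableS _ _ _ mu setT) => //.
rewrite phi_normal; exact: integrable_normal_pdf.
Qed.

Lemma is_derive_sq (t : R) : is_derive t 1 (fun x : R => - (x ^+ 2) / 2) (- t).
Proof.
have h : is_derive t 1 (fun x : R => x ^+ 2) (2 * t).
  by apply: is_derive_eq; rewrite -[t%:A]/(t * 1) mulr1 mulr2n mulrDl mul1r.
apply: is_derive_eq.
rewrite !scaler0 add0r -[_ *: _]/(_ * _).
by rewrite mulrN mulrA mulVf ?pnatr_eq0 // mul1r.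
Qed.

Lemma is_derive_phi (t : R) : is_derive t 1 (@phi R) (- t * phi t).
Proof.
have h1 := @is_derive1_comp R expR (fun x : R => - (x ^+ 2) / 2) t _ _
   (is_derive_expR _) (is_derive_sq t).
have h2 := is_deriveZ K h1.
have -> : @phi R = K \*: (expR \o (fun x : R => - (x ^+ 2) / 2)).
  by apply/funext => x.
apply: is_derive_eq h2 _.
rewrite -[_ *: _]/(_ * _) /= -[K *: _]/(K * _); ring.
Qed.

Lemma cont_of_derive (F f : R -> R) : (forall t : R, is_derive t (1:R) F (f t)) -> continuous F.
Proof.
move=> dF t; apply/differentiable_continuous; apply/derivable1_diffP.
exact: ex_derive.
Qed.

Lemma ftc_R (f F : R -> R) (a b : R) : a < b -> continuous f ->
  (forall t : R, is_derive t (1:R) F (f t)) ->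
  \int[mu]_(t in `[a, b]) f t = F b - F a.
Proof.
move=> ab cf dF; rewrite /Rintegral (@continuous_FTC2 R f F a b ab) /=.
- by [].
- exact: continuous_subspaceT.
- split.
  + by move=> x _; exact: ex_derive.
  + by apply: cvg_at_right_filter; exact: cont_of_derive.
  + by apply: cvg_at_left_filter; exact: cont_of_derive.
- by move=> x _; rewrite derive1E derive_val.
Qed.

Lemma int_cont (f : R -> R) (a b : R) : continuous f ->
  mu.-integrable `[a, b] (EFin \o f).
Proof.
move=> cf; apply: continuous_compact_integrable; first exact: segment_compact.
exact: continuous_subspaceT.
Qed.

Lemma Q_split (a b : R) : a <= b ->
  Qf a = \int[mu]_(t in `[a, b]) phi t + Qf b.
Proof.
move=> ab.
have iA : mu.-integrable `[a, +oo[ (EFin \o @phi R) by apply: integrable_phi.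
have H := @Rintegral_itvB R (@phi R) (BLeft a) (BInfty _ false) b iA.
rewrite /Qf -(@Rintegral_itv_obnd_cbnd _ b); last by apply: integrable_phi.
rewrite -H ?bnd_simp //; ring.
Qed.

#[local] Hint Resolve is_derive_phi : typeclass_instances.

Lemma cont_der (g : R -> R) : (forall t : R, derivable g t 1) -> continuous g.
Proof.
move=> dg t; apply/differentiable_continuous; apply/derivable1_diffP; exact: dg.
Qed.

Lemma bracket (a b al be ga de : R) : a < b ->
  (forall t, a <= t <= b -> 0 <= al * t + be + ga * (t * phi t) + de * phi t) ->
  0 <= al * (b ^+ 2 - a ^+ 2) / 2 + be * (b - a) + ga * (phi a - phi b)
       + de * \int[mu]_(t in `[a, b]) phi t.
Proof.
move=> ab hpos.
have c1 : continuous (fun t : R => al * t + be + ga * (t * phi t)).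
  apply: cont_der => t. exact: ex_derive.
have c2 : continuous (fun t : R => de * phi t).
  apply: cont_der => t. exact: ex_derive.
have F1 : \int[mu]_(t in `[a, b]) (al * t + be + ga * (t * phi t)) =
   (al * b ^+ 2 / 2 + be * b - ga * phi b) - (al * a ^+ 2 / 2 + be * a - ga * phi a).
  apply: (@ftc_R _ (fun t => al * t ^+ 2 / 2 + be * t - ga * phi t) _ _ ab c1) => t.
  apply: is_derive_eq; rewrite !scaler0.
  repeat rewrite -[_ *: _]/(_ * _).
  by field.
have h : 0 <= \int[mu]_(t in `[a, b]) (al * t + be + ga * (t * phi t) + de * phi t).
  apply: Rintegral_ge0 => t; rewrite /= in_itv /=; exact: hpos.
rewrite RintegralD // in h; last 2 first.
- exact: int_cont.
- exact: int_cont.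
rewrite RintegralZl // in h; last by apply: integrable_phi.
rewrite F1 in h; apply: (le_trans h); rewrite le_eqVlt; apply/orP; left; apply/eqP.
ring.
Qed.

Lemma expR_lb (x : R) : 1 + x <= expR x.
Proof. exact: expR_ge1Dx. Qed.

Lemma inv_lt (e a b : R) : 0 < a -> 0 < b -> a * b = 1 -> a < e -> e^-1 < b.
Proof.
move=> a0 b0 ab h; have e0 : 0 < e by apply: lt_trans h.
have := mulVf (lt0r_neq0 e0); have := invr_gt0 e; rewrite e0 => ie0 ee.
nra.
Qed.

Lemma num1 : 1 / 2 < expR (- (1 / 8)) - expR (- (9 / 8) : R).
Proof.
have h1 := expR_lb (- (1 / 8)).
have h2 := expR_lb (9 / 32).
have e4 : expR (9 / 8 : R) = expR (9 / 32) ^+ 4.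
  by rewrite -expRM_natl; congr expR; field.
have h3 : 8 / 3 < expR (9 / 8 : R).
  rewrite e4; set u := expR _.
  have hu : 41 / 32 <= u by rewrite /u; lra.
  have hv : (41 / 32) * (41 / 32) <= u ^+ 2 by rewrite expr2; nra.
  have -> : u ^+ 4 = u ^+ 2 * u ^+ 2 by rewrite -exprD.
  nra.
rewrite (expRN (9 / 8)).
have := @inv_lt (expR (9 / 8)) (8 / 3) (3 / 8) ltac:(lra) ltac:(lra) ltac:(field) ltac:(lra).
lra.
Qed.

Lemma phi_val (u : R) : phi u = K * expR (- (u ^+ 2 / 2)).
Proof. by rewrite phiE mulNr. Qed.

Lemma partI (sy etop : R) : 0 < sy -> ~ convex_on_R (P_DCO sy etop).
Proof.
move=> sy0 H.
set c := etop - 1.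
have Hc := H (c - 1 / 2) (c + 1 / 2) (1 / 2) ltac:(apply/andP; split; lra).
have e1 : 1 / 2 * (c - 1 / 2) + (1 - 1 / 2) * (c + 1 / 2) = c by field.
rewrite e1 /P_DCO in Hc.
have ex : etop - (c - 1 / 2) = 3 / 2 by rewrite /c; field.
have ey : etop - (c + 1 / 2) = 1 / 2 by rewrite /c; field.
have ec : etop - c = 1 by rewrite /c; ring.
rewrite ex ey ec in Hc.
have Qx := Q_split (c - 1 / 2) c ltac:(lra).
have Qc := Q_split c (c + 1 / 2) ltac:(lra).
have B1 := bracket (c - 1 / 2) c K (- K * (c - 1 / 2)) (-1) (c - 1 / 2) ltac:(lra).
have B2 := bracket c (c + 1 / 2) (- K) (K * (c + 1 / 2)) 1 (- (c + 1 / 2)) ltac:(lra).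
have pK := K_gt0.
have {}B1 := B1 ltac:(move=> t /andP[t1 t2]; have := phi_le0 t; nra).
have {}B2 := B2 ltac:(move=> t /andP[t1 t2]; have := phi_le0 t; nra).
set I1 := \int[mu]_(t in `[c - 1 / 2, c]) phi t in Qx B1.
set I2 := \int[mu]_(t in `[c, c + 1 / 2]) phi t in Qc B2.
have Qy : Qf (c + 1 / 2) = Qf c - I2 by rewrite Qc; ring.
rewrite Qx Qy in Hc.
have N := num1.
have N2 : K / 2 < phi (1 / 2) - phi (3 / 2).
  rewrite !phi_val.
  have -> : (1 / 2 : R) ^+ 2 / 2 = 1 / 8 by field.
  have -> : (3 / 2 : R) ^+ 2 / 2 = 9 / 8 by field.
  nra.
clearbody I1 I2 c.
have hD : (phi (c - 1 / 2) - phi c - (c - 1 / 2) * I1)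
  + (phi (c + 1 / 2) - phi c + (c + 1 / 2) * I2)
  + 1 / 2 * (phi (3 / 2) - phi (1 / 2)) < 0 by lra.
nra.
Qed.

Lemma inv_le (e a b : R) : 0 < a -> 0 < b -> a * b = 1 -> a <= e -> e^-1 <= b.
Proof.
move=> a0 b0 ab h; have e0 : 0 < e by apply: lt_le_trans h.
have := mulVf (lt0r_neq0 e0); have := invr_gt0 e; rewrite e0 => ie0 ee.
nra.
Qed.

Lemma num2 : 32 * expR (- (1 / 512)) - (31 / 16) * expR (- (1 / 2))
   - (31 - 15 / 496) * expR (- (1 / 1922)) < 0 :> R.
Proof.
have h1 := expR_lb (- (1 / 1922)).
have h2 := expR_lb (- (1 / 4)).
have h3 := expR_lb (1 / 512).
have e2 : expR (- (1 / 2) : R) = expR (- (1 / 4)) ^+ 2.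
  by rewrite -expRM_natl; congr expR; field.
have h4 : 9 / 16 <= expR (- (1 / 2) : R).
  rewrite e2 expr2; have := expR_gt0 (- (1 / 4) : R); nra.
rewrite (expRN (1 / 512)).
have := @inv_le (expR (1 / 512)) (513 / 512) (512 / 513) ltac:(lra) ltac:(lra) ltac:(field) ltac:(lra).
lra.
Qed.

Lemma int_cst (a b M : R) : a < b -> \int[mu]_(t in `[a, b]) M = M * (b - a).
Proof.
move=> ab.
have d : forall t : R, is_derive t (1:R) (fun t => M * t) M.
  move=> t; apply: is_derive_eq.
  by rewrite -[M *: _]/(M * _) mulr1.
rewrite (@ftc_R (fun=> M) (fun t => M * t) a b ab (@cst_continuous _ _ M) d).
by ring.
Qed.

Lemma int_ub (a b M : R) : a < b -> (forall t, a <= t <= b -> phi t <= M) ->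
  \int[mu]_(t in `[a, b]) phi t <= M * (b - a).
Proof.
move=> ab hM; rewrite -int_cst //.
apply: le_Rintegral => //.
- by apply: integrable_phi.
- by apply: int_cont => t; exact: cvg_cst.
Qed.

Lemma int_lb (a b M : R) : a < b -> (forall t, a <= t <= b -> M <= phi t) ->
  M * (b - a) <= \int[mu]_(t in `[a, b]) phi t.
Proof.
move=> ab hM; rewrite -int_cst //.
apply: le_Rintegral => //.
- by apply: int_cont => t; exact: cvg_cst.
- by apply: integrable_phi.
Qed.

Lemma sigma_scale (m : nat) (t : R) : 0 <= t ->
  sigma_y (t *: (const_mx 1 : 'rV[R]_m)) = t * Num.sqrt (m%:R).
Proof.
move=> t0; rewrite /sigma_y.
under eq_bigr do rewrite !mxE mulr1.
rewrite sumr_const card_ord -(mulr_natr (t ^+ 2)) sqrtrM ?sqr_ge0 // sqrtr_sqr ger0_norm //.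
Qed.

Lemma F_val (ymax s : R) (m : nat) (t : R) : 0 < t -> 0 < ymax ->
  t * Num.sqrt (m%:R) = s -> 0 < s ->
  P_ACO ymax (t *: (const_mx 1 : 'rV[R]_m)) =
  s * K + ymax * Qf (ymax / s) - s * phi (ymax / s).
Proof.
move=> t0 y0 ts s0; rewrite /P_ACO /= sigma_scale ?ltW // ts.
rewrite /K.
have -> : s * (ymax / s * Qf (ymax / s) - phi (ymax / s)) =
  (s / s) * ymax * Qf (ymax / s) - s * phi (ymax / s) by ring.
rewrite divff ?lt0r_neq0 // mul1r; ring.
Qed.

Lemma partII (ymax : R) (m : nat) : 0 < ymax -> (1 <= m)%N ->
  ~ convex_on_nonzero (@P_ACO R ymax m).
Proof.
move=> y0 m1 H.
set N := Num.sqrt (m%:R : R).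
have N0 : 0 < N by rewrite sqrtr_gt0 ltr0n.
set v := const_mx 1 : 'rV[R]_m.
set a := ymax / N.
set b := 31 * ymax / N.
have a0 : 0 < a by rewrite /a divr_gt0.
have b0 : 0 < b by rewrite /b divr_gt0 // mulr_gt0.
have nz : forall s : R, 0 <= s <= 1 -> s *: (a *: v) + (1 - s) *: (b *: v) != 0.
  move=> s /andP[s0 s1]; rewrite !scalerA -scalerDl.
  apply/negP => /eqP h.
  have := congr1 (fun M : 'rV[R]_m => M 0 (Ordinal m1)) h; rewrite !mxE /= mulr1.
  move=> h'; nra.
have Hc := H (a *: v) (b *: v) nz (1 / 2) ltac:(apply/andP; split; lra).
rewrite !scalerA -scalerDl in Hc.
have Nn : N != 0 by rewrite lt0r_neq0.
rewrite (@F_val ymax (16 * ymax)) in Hc; last 4 first.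
- rewrite /a /b; apply: addr_gt0; apply: mulr_gt0; rewrite ?divr_gt0 ?mulr_gt0 //; lra.
- by [].
- by rewrite /a /b -/N; field.
- lra.
rewrite (@F_val ymax ymax) // in Hc; last by rewrite /a -/N; field.
rewrite (@F_val ymax (31 * ymax)) // in Hc; last 2 first.
- by rewrite /b -/N; field.
- lra.
have yn : ymax != 0 by rewrite lt0r_neq0.
have e1 : ymax / ymax = 1 by rewrite divff.
have e16 : ymax / (16 * ymax) = 1 / 16 by field.
have e31 : ymax / (31 * ymax) = 1 / 31 by field.
rewrite e1 e16 e31 in Hc.
have Q1 := Q_split (1 / 31) (1 / 16) ltac:(lra).
have Q2 := Q_split (1 / 16) 1 ltac:(lra).
have l1 : (1 / 31 : R) < 1 / 16 by lra.
have l2 : (1 / 16 : R) < 1 by lra.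
have J2 := @int_ub (1 / 31) (1 / 16) (phi (1 / 31)) l1
  ltac:(move=> t /andP[t1 t2]; apply: phi_anti => //; lra).
have J1 := @int_lb (1 / 16) 1 (phi 1) l2
  ltac:(move=> t /andP[t1 t2]; apply: phi_anti => //; lra).
set I2 := \int[mu]_(t in `[1 / 31, 1 / 16]) phi t in Q1 J2.
set I1 := \int[mu]_(t in `[1 / 16, 1]) phi t in Q2 J1.
have NN := num2.
have pK := K_gt0.
have p1 : @phi R 1 = K * expR (- (1 / 2)).
  by rewrite phi_val; congr (_ * expR (- _)); field.
have p16 : @phi R (1 / 16) = K * expR (- (1 / 512)).
  by rewrite phi_val; congr (_ * expR (- _)); field.
have p31 : @phi R (1 / 31) = K * expR (- (1 / 1922)).
  by rewrite phi_val; congr (_ * expR (- _)); field.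
have NK : 32 * @phi R (1 / 16) - (31 / 16) * @phi R 1 - (31 - 15 / 496) * @phi R (1 / 31) < 0.
  have hh : K * (32 * expR (- (1 / 512)) - (31 / 16) * expR (- (1 / 2))
     - (31 - 15 / 496) * expR (- (1 / 1922))) < 0 by rewrite pmulr_rlt0.
  lra.
rewrite Q1 Q2 in Hc.
clearbody I1 I2.
have hD : - I1 + I2 - phi 1 - 31 * phi (1 / 31) + 32 * phi (1 / 16) < 0 by lra.
nra.
Qed.

End Aux.

Theorem lemma1 (R : realType) :
  (forall sy etop : R, 0 < sy -> ~ convex_on_R (P_DCO sy etop)) /\
  (forall (ymax : R) (m : nat), 0 < ymax -> (1 <= m)%N ->
     ~ convex_on_nonzero (@P_ACO R ymax m)).
Proof.
split.
- move=> sy etop; exact: partI.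
- move=> ymax m; exact: partII.
Qed.
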